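(* Let $F$ be a forest and let $U$ be a unicyclic graph vertex-disjoint from $F$. (i) Every nontrivial 2-switch over $F$ is a p-switch over $F$. (ii) Let $\tau=\tau_A$, $A=\binom{a\ b}{c\ d}$, be a 2-switch over $G=F\,\dot\cup\, U$ (the disjoint union). If $ab\in E(F)$ and $cd\in E(\operatorname{Forest}(U))$, then $\tau$ is a p-switch over $G$.
   Context: Graphs are finite, simple, undirected, labeled. A unicyclic graph is a connected graph with exactly one cycle; a pseudoforest is a graph each of whose components is a tree or a unicyclic graph. For vertices $a,b,c,d$, $A=\binom{a\ b}{c\ d}$ is interchangeable in $G$ if $ab,cd\in E(G)$, $\{a,b\}\cap\{c,d\}=\varnothing$, $ac,bd\notin E(G)$; the 2-switch $\tau_A$ sends $G$ to $G-ab-cd+ac+bd$ if $A$ is interchangeable and to $G$ otherwise (trivial). A nontrivial 2-switch $\tau$ over a pseudoforest $G$ is a p-switch if $\tau(G)$ is a pseudoforest. $\operatorname{Cycles}(H)$ is the subgraph induced by vertices lying on some cycle of $H$; $\operatorname{Forest}(H)=H-E(\operatorname{Cycles}(H))$. *)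

(* Defs.v *)
From mathcomp Require Import all_boot.
Set Implicit Arguments. Unset Strict Implicit. Unset Printing Implicit Defensive.

Section Graphs.
Variable T : finType.

Record graph := Graph { verts : {set T}; edges : {set {set T}} }.

Definition wf (G : graph) : Prop :=
  forall e, e \in edges G -> #|e| = 2 /\ e \subset verts G.

Definition adjE (E : {set {set T}}) : rel T := fun x y => [set x; y] \in E.
Definition adj (G : graph) : rel T := adjE (edges G).

Definition connected (G : graph) : bool :=
  [forall x in verts G, forall y in verts G, connect (adj G) x y].

Definition coverE (C : {set {set T}}) : {set T} := \bigcup_(e in C) e.

(* a cycle of G, given by its (nonempty) edge set: the subgraph spanned by C
   is connected and 2-regular *)
Definition is_cycle (G : graph) (C : {set {set T}}) : bool :=
  [&& C \subset edges G, C != set0,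
      [forall v in coverE C, #|[set e in C | v \in e]| == 2] &
      [forall u in coverE C, forall v in coverE C, connect (adjE C) u v]].

Definition acyclic (G : graph) : bool := [forall C, ~~ is_cycle G C].
Definition forest (G : graph) : bool := acyclic G.
Definition tree (G : graph) : bool := connected G && acyclic G.
Definition unicyclic (G : graph) : bool :=
  connected G && (#|[set C | is_cycle G C]| == 1).

Definition induced (G : graph) (S : {set T}) : graph :=
  Graph (verts G :&: S) [set e in edges G | e \subset S].

Definition component (G : graph) (x : T) : graph :=
  induced G [set y | connect (adj G) x y].

Definition pseudoforest (G : graph) : bool :=
  [forall x in verts G, tree (component G x) || unicyclic (component G x)].

Definition cycle_verts (H : graph) : {set T} :=
  [set v in verts H | [exists C, is_cycle H C && (v \in coverE C)]].
Definition Cycles (H : graph) : graph := induced H (cycle_verts H).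
Definition Forest (H : graph) : graph :=
  Graph (verts H) (edges H :\: edges (Cycles H)).

(* disjoint union (vertex-disjointness is a separate hypothesis) *)
Definition gunion (G H : graph) : graph :=
  Graph (verts G :|: verts H) (edges G :|: edges H).

Definition interchangeable (G : graph) (a b c d : T) : bool :=
  [&& [set a; b] \in edges G, [set c; d] \in edges G,
      [disjoint [set a; b] & [set c; d]],
      [set a; c] \notin edges G & [set b; d] \notin edges G].

Definition switch (G : graph) (a b c d : T) : graph :=
  if interchangeable G a b c d then
    Graph (verts G)
      ((edges G :\ [set a; b] :\ [set c; d]) :|: [set [set a; c]; [set b; d]])
  else G.

Definition p_switch (G : graph) (a b c d : T) : bool :=
  [&& pseudoforest G, interchangeable G a b c d &
      pseudoforest (switch G a b c d)].

End Graphs.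

(* Main.v *)
Require Import Defs.
From mathcomp Require Import all_boot.
From mathcomp Require Import zify.
Set Implicit Arguments. Unset Strict Implicit. Unset Printing Implicit Defensive.

Definition cyc {T : finType} (C : {set {set T}}) : bool :=
  [&& C != set0,
      [forall v in coverE C, #|[set e in C | v \in e]| == 2] &
      [forall u in coverE C, forall v in coverE C, connect (adjE C) u v]].

Lemma is_cycleE {T : finType} (G : graph T) C :
  is_cycle G C = (C \subset edges G) && cyc C.
Proof. by []. Qed.

Definition wfE {T : finType} (E : {set {set T}}) := forall f, f \in E -> #|f| = 2.

Lemma adjE_sym {T : finType} (E : {set {set T}}) : symmetric (adjE E).
Proof. by move=> x y; rewrite /adjE setUC. Qed.

Lemma connectE_sym {T : finType} (E : {set {set T}}) x y :
  connect (adjE E) x y = connect (adjE E) y x.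
Proof. by apply: sym_connect_sym; apply: adjE_sym. Qed.

Lemma conn_closed {T : finType} (e : rel T) (S : {set T}) x y :
  (forall w z, w \in S -> e w z -> z \in S) -> connect e x y -> x \in S -> y \in S.
Proof.
move=> cl /connectP [p pth ->]; elim: p x pth => [|z p IH] x //= /andP [exz pz] xS.
exact: IH pz (cl _ _ xS exz).
Qed.

Lemma connect_mono {T : finType} (E E' : {set {set T}}) x y :
  E \subset E' -> connect (adjE E) x y -> connect (adjE E') x y.
Proof.
move=> sub; apply: connect_sub => p q epq; apply: connect1; exact: (subsetP sub).
Qed.

Lemma connect_cover {T : finType} (D : {set {set T}}) u w :
  connect (adjE D) u w -> w = u \/ w \in coverE D.
Proof.
rewrite connectE_sym => /connectP [[|z p] /= pp lw]; first by left.
right; case/andP: pp => wz _; apply/bigcupP; exists [set w; z] => //.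
by rewrite !inE eqxx.
Qed.

Definition deg {T : finType} (D : {set {set T}}) (w : T) := #|[set f in D | w \in f]|.

Lemma card_sum {T : finType} (A : {set T}) (P : pred T) :
  #|[set x in A | P x]| = \sum_(x in A) P x.
Proof.
rewrite -sum1_card big_mkcond [RHS]big_mkcond /=; apply: eq_bigr => x _.
by rewrite inE; case: (x \in A); case: (P x).
Qed.

Lemma deg_setU1 {T : finType} (D : {set {set T}}) f w :
  f \notin D -> deg (f |: D) w = (w \in f) + deg D w.
Proof. by move=> fD; rewrite /deg !card_sum big_setU1. Qed.

Lemma cycle_conn {T : finType} (C : {set {set T}}) u v :
  wfE C -> cyc C -> [set u; v] \in C -> u != v ->
  connect (adjE (C :\ [set u; v])) u v.
Proof.
move=> wC /and3P [_ /forall_inP dg _] eC uv.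
apply/idPn => nuv.
set e := [set u; v] in eC nuv *.
set K := [set w | connect (adjE (C :\ e)) u w].
have uK : u \in K by rewrite inE connect0.
have vK : v \notin K by rewrite inE.
have Kdeg : forall w, w \in K -> deg C w = 2.
  move=> w; rewrite inE => /connect_cover [->|].
    apply/eqP/dg; apply/bigcupP; exists e => //; by rewrite !inE eqxx.
  move/bigcupP => [f]; rewrite inE => /andP [_ fC] wf.
  apply/eqP/dg; apply/bigcupP; by exists f.
have H1 : \sum_(w in K) deg C w = 2 * #|K|.
  by rewrite (eq_bigr (fun _ => 2)) ?sum_nat_const 1?mulnC // => w /Kdeg.
have H2 : \sum_(w in K) deg C w = \sum_(f in C) #|f :&: K|.
  rewrite /deg (eq_bigr (fun w => \sum_(f in C) (w \in f))); last by move=> w _; rewrite card_sum.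
  rewrite exchange_big /=; apply: eq_bigr => f _.
  rewrite setIC -card_sum; congr (#|_|); apply/setP => x; by rewrite !inE.
have H3 : forall f, f \in C -> f != e -> #|f :&: K| = 2 * (f \subset K).
  move=> f fC fe; have /eqP/cards2P [x [y [xy fxy]]] := wC f fC.
  have xyK : (x \in K) = (y \in K).
    have st : forall p q, [set p; q] = f -> p \in K -> q \in K.
      move=> p q pqf; rewrite !inE => up; apply: connect_trans up _; apply: connect1.
      by rewrite /adjE pqf !inE fe fC.
    apply/idP/idP; first exact: st.
    by apply: st; rewrite fxy setUC.
  rewrite fxy; case xK: (x \in K).
    have -> : [set x; y] :&: K = [set x; y].
      by apply/setIidPl/subsetP => z /set2P [] ->; rewrite -?xyK xK.
    have -> : [set x; y] \subset K.
      by apply/subsetP => z /set2P [] ->; rewrite -?xyK xK.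
    by rewrite cards2 xy.
  have -> : [set x; y] :&: K = set0.
    by apply/setP => z; rewrite in_setI in_set0; apply/negbTE/negP => /andP [/set2P [] -> ]; rewrite -?xyK xK.
  have -> : ([set x; y] \subset K) = false.
    by apply/negP => /subsetP /(_ x); rewrite in_set2 eqxx xK => /(_ isT).
  by rewrite cards0.
have H4 : #|e :&: K| = 1.
  have -> : e :&: K = [set u].
    apply/setP => z; rewrite in_setI in_set2 in_set1; case: (z =P u) => [->|]; first by rewrite uK.
    by move=> zu /=; case: (z =P v) => [->|]; rewrite ?(negbTE vK).
  by rewrite cards1.
move: H2; rewrite H1 (bigD1 e) //= H4.
have H5 : \sum_(f in C | f != e) #|f :&: K| = 2 * \sum_(f in C | f != e) (f \subset K).
  by rewrite big_distrr; apply: eq_bigr => f /andP [fC fe]; rewrite H3.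
rewrite H5; lia.
Qed.


Fixpoint pth {T : finType} (x : T) (s : seq T) : {set {set T}} :=
  if s is y :: s' then [set x; y] |: pth y s' else set0.

Lemma pth_sub {T : finType} (E : {set {set T}}) x s :
  path (adjE E) x s -> pth x s \subset E.
Proof.
elim: s x => [|y s IH] x /=; first by rewrite sub0set.
case/andP => xy ps; rewrite subUset sub1set; apply/andP; split; [exact: xy | exact: IH].
Qed.

Lemma pth_in {T : finType} x (s : seq T) f w :
  f \in pth x s -> w \in f -> w \in x :: s.
Proof.
elim: s x => [|y s IH] x /=; first by rewrite inE.
rewrite in_setU1 => /orP [/eqP -> /set2P [] ->|fp wf].
- by rewrite mem_head.
- by rewrite in_cons mem_head orbT.
- by rewrite in_cons (IH y fp wf) orbT.
Qed.

Lemma pth_conn {T : finType} x (s : seq T) w :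
  w \in x :: s -> connect (adjE (pth x s)) x w.
Proof.
elim: s x => [|y s IH] x /=; first by rewrite inE => /eqP ->.
rewrite in_cons => /orP [/eqP -> //|ws].
have xy : adjE ([set x; y] |: pth y s) x y by rewrite /adjE setU11.
apply: connect_trans (connect1 xy) _.
apply: connect_mono (IH y ws); exact: subsetUr.
Qed.

Lemma pth_deg {T : finType} x (s : seq T) w :
  uniq (x :: s) -> deg (pth x s) w + (w == x) + (w == last x s) = 2 * (w \in x :: s).
Proof.
elim: s x => [|y s IH] x /=.
  rewrite /deg; have -> : [set f in (set0 : {set {set T}}) | w \in f] = set0.
    by apply/setP => f; rewrite !inE.
  by rewrite cards0 inE; case: (w == x).
case/andP; rewrite in_cons negb_or => /andP [xy xs] us.
have nin : [set x; y] \notin pth y s.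
  by apply/negP => /(pth_in (w:=x)) /(_ (setU11 _ _)); rewrite in_cons (negbTE xs) orbF; exact/negP.
rewrite deg_setU1 // in_set2.
have := IH y us; rewrite !in_cons.
case: (boolP (w == x)) => [/eqP ->|wx].
  rewrite (negbTE xy) (negbTE xs) /=; case: (x == last y s) => /=; lia.
case: (w == y); case: (w \in s); case: (w == last y s) => /=; lia.
Qed.

Lemma pth_cons {T : finType} (x y : T) s : pth x (y :: s) = [set x; y] |: pth y s.
Proof. by []. Qed.

Lemma path_cycle {T : finType} (E : {set {set T}}) u v :
  connect (adjE E) u v -> [set u; v] \notin E -> u != v ->
  exists C : {set {set T}}, [/\ C \subset [set u; v] |: E, [set u; v] \in C & cyc C].
Proof.
move=> /connectP [p pp ->] {v}.
case: (shortenP pp) => s ps us _ {p pp} nE uv.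
have [y [z [s' sE]]] : exists y z s', s = y :: z :: s'.
  case: s ps us nE uv => [|y [|z s']] /=.
  - by move=> _ _ _; rewrite eqxx.
  - by rewrite andbT /adjE => uy _ /negP [].
  by move=> *; exists y, z, s'.
set v := last u s in nE uv *.
have vin : v \in u :: s by apply: mem_last.
have cl : [set u; v] \notin pth u s.
  rewrite sE pth_cons in_setU1 negb_or; apply/andP; split.
    apply/eqP => e; have : v \in [set u; y] by rewrite -e set22.
    case/set2P => vy; first by rewrite vy eqxx in uv.
    move: us; rewrite sE /= => /and3P [_ ].
    by move=> /negP []; rewrite -vy /v sE /=; apply: mem_last.
  apply/negP => /(pth_in (w:=u)) /(_ (setU11 _ _)).
  by move: us; rewrite sE /= => /andP [] /negP.
set C := [set u; v] |: pth u s.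
have degC : forall w, deg C w = 2 * (w \in u :: s).
  move=> w; rewrite /C deg_setU1 // -(pth_deg w us) -/v in_set2.
  case: (w =P u) => [->|wu]; first by rewrite (negbTE uv) /=; lia.
  case: (w =P v) => /=; lia.
have covC : forall w, w \in coverE C -> w \in u :: s.
  move=> w /bigcupP [f]; rewrite /C in_setU1 => /orP [/eqP ->|fp] wf.
    by case/set2P: wf => ->; rewrite ?mem_head.
  exact: pth_in fp wf.
have conC : forall w, w \in u :: s -> connect (adjE C) u w.
  by move=> w /pth_conn; apply: connect_mono; apply: subsetUr.
exists C; split.
- by rewrite /C; apply: setUS; apply: pth_sub.
- exact: setU11.
apply/and3P; split.
- by apply/set0Pn; exists [set u; v]; apply: setU11.
- by apply/forall_inP => w /covC wi; have := degC w; rewrite wi /deg => ->.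
apply/forall_inP => w1 /covC /conC c1; apply/forall_inP => w2 /covC /conC c2.
by apply: connect_trans c2; rewrite connectE_sym.
Qed.


Lemma cycle_exchange {T : finType} (E C1 C2 : {set {set T}}) e f :
  wfE E -> C1 \subset E -> C2 \subset E -> cyc C1 -> cyc C2 ->
  e \in C2 -> f \in C1 -> f \notin C2 ->
  exists C : {set {set T}}, (C \subset E :\ e) && cyc C.
Proof.
move=> wE s1 s2 c1 c2 eC2 fC1 fC2.
have wC1 : wfE C1 := fun g gC => wE g (subsetP s1 g gC).
have wC2 : wfE C2 := fun g gC => wE g (subsetP s2 g gC).
have /eqP/cards2P [x [y [xy fxy]]] := wC1 f fC1.
have conn : connect (adjE (C1 :\ f)) x y.
  by rewrite fxy; apply: cycle_conn => //; rewrite -fxy.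
have conn' : connect (adjE (E :\ e :\ f)) x y.
  apply: (connect_sub _ conn) => p q; rewrite /adjE in_setD1 => /andP [pqf pqC1].
  case: (eqVneq [set p; q] e) => [pqe | pqe].
    case: (eqVneq p q) => [-> | pq]; first exact: connect0.
    have := cycle_conn wC2 c2 (etrans (f_equal _ pqe) (congr1 (fun b => b) eC2)) pq.
    apply: connect_mono; rewrite pqe; apply/subsetP => g; rewrite !in_setD1 => /andP [ge gC2].
    rewrite ge (subsetP s2 _ gC2) andbT andbT; apply/eqP => gf; by rewrite -gf gC2 in fC2.
  by apply: connect1; rewrite /adjE !in_setD1 pqe pqf (subsetP s1 _ pqC1).
have nf : [set x; y] \notin E :\ e :\ f by rewrite -fxy in_setD1 eqxx.
have [C [sC _ cC]] := path_cycle conn' nf xy.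
exists C; rewrite cC andbT; apply: subset_trans sC _.
rewrite -fxy; apply/subsetP => g; rewrite in_setU1 => /orP [/eqP ->|].
  rewrite in_setD1 (subsetP s1 _ fC1) andbT; apply/eqP => fe; by rewrite fe eC2 in fC2.
by rewrite in_setD1 => /andP [_].
Qed.

Lemma two_cycles {T : finType} (E C1 C2 : {set {set T}}) e :
  wfE E -> C1 \subset E -> C2 \subset E -> cyc C1 -> cyc C2 -> C1 != C2 ->
  exists C : {set {set T}}, (C \subset E :\ e) && cyc C.
Proof.
move=> wE s1 s2 c1 c2 ne.
have avoid : forall C : {set {set T}}, C \subset E -> cyc C -> e \notin C ->
    exists C' : {set {set T}}, (C' \subset E :\ e) && cyc C'.
  move=> C sC cC eC; exists C; rewrite cC andbT; apply/subsetP => g gC.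
  rewrite in_setD1 (subsetP sC _ gC) andbT; apply/eqP => ge; by rewrite -ge gC in eC.
case: (boolP (e \in C1)) => eC1; last exact: avoid eC1.
case: (boolP (e \in C2)) => eC2; last exact: avoid eC2.
case: (boolP (C1 \subset C2)) => sub.
  have : ~~ (C2 \subset C1) by apply/negP => s; rewrite eqEsubset sub s in ne.
  case/subsetPn => f fC2 fC1; exact: cycle_exchange wE s2 s1 c2 c1 eC1 fC2 fC1.
case/subsetPn: sub => f fC1 fC2; exact: cycle_exchange wE s1 s2 c1 c2 eC2 fC1 fC2.
Qed.

Lemma reach_add {T : finType} (E : {set {set T}}) u v x y :
  connect (adjE ([set u; v] |: E)) x y ->
  [|| connect (adjE E) x y, connect (adjE E) x u | connect (adjE E) x v].
Proof.
move=> cxy; apply/negPn/negP => /norP [nxy /norP [nxu nxv]].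
have : y \in [set w | connect (adjE E) x w].
  apply: (conn_closed (S := [set w | connect (adjE E) x w]) _ cxy); last by rewrite inE connect0.
  move=> w z; rewrite inE => xw; rewrite /adjE in_setU1 => /orP [/eqP e | wz].
    have : w \in [set u; v] by rewrite -e set21.
    by case/set2P => [wu|wv]; move: xw; rewrite ?wu ?wv ?(negbTE nxu) ?(negbTE nxv).
  by rewrite inE (connect_trans xw (connect1 wz)).
by rewrite inE (negbTE nxy).
Qed.

Lemma side {T : finType} (F U : graph T) (H : {set {set T}}) x y :
  wf F -> wf U -> [disjoint verts F & verts U] -> H \subset edges F :|: edges U ->
  connect (adjE H) x y -> x \in verts F -> y \in verts F.
Proof.
move=> wF wU dj sH cxy; apply: (conn_closed (S := verts F) _ cxy) => w z wF' wz.
have := subsetP sH _ wz; rewrite in_setU => /orP [eF|eU].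
  by have [_ /subsetP] := wF _ eF; apply; rewrite set22.
have [_ /subsetP sU] := wU _ eU.
have wU' := sU w (set21 _ _).
by rewrite (disjointFr dj wF') in wU'.
Qed.

Lemma cycle_split {T : finType} (F U : graph T) (C : {set {set T}}) :
  wf F -> wf U -> [disjoint verts F & verts U] -> C \subset edges F :|: edges U -> cyc C ->
  (C \subset edges F) || (C \subset edges U).
Proof.
move=> wF wU dj sC /and3P [_ _ /forall_inP cC].
case: (boolP (C \subset edges U)) => sU; first by rewrite orbT.
case/subsetPn: sU => f fC fU.
have fF : f \in edges F by move: (subsetP sC _ fC); rewrite in_setU (negbTE fU) orbF.
have [f2 /subsetP fsub] := wF _ fF.
have /eqP/cards2P [x [x2 [_ fx]]] := f2.
have xf : x \in f by rewrite fx set21.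
have xc : x \in coverE C by apply/bigcupP; exists f.
apply/orP; left; apply/subsetP => g gC.
have g2 : #|g| = 2.
  by move: (subsetP sC _ gC); rewrite in_setU => /orP [/wF [] | /wU []].
have /eqP/cards2P [y [y2 [_ gy]]] := g2.
have yg : y \in g by rewrite gy set21.
have yc : y \in coverE C by apply/bigcupP; exists g.
have cxy := forall_inP (cC x xc) y yc.
have yF := side wF wU dj sC cxy (fsub x xf).
have := subsetP sC _ gC; rewrite in_setU => /orP [//|gU].
have [_ /subsetP gs] := wU _ gU.
by have := gs y yg; rewrite (disjointFr dj yF).
Qed.

Lemma comp_path {T : finType} (G : graph T) x z p :
  connect (adj G) x z -> path (adj G) z p -> path (adj (component G x)) z p.
Proof.
elim: p z => [|w p IH] z //= xz /andP [zw pw].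
have xw : connect (adj G) x w := connect_trans xz (connect1 zw).
rewrite IH // andbT /adj /component /induced /= /adjE inE.
rewrite /adj /adjE in zw; rewrite zw /=.
by apply/subsetP => t /set2P [] ->; rewrite inE.
Qed.

Lemma pf_of_uniq {T : finType} (G : graph T) :
  (forall C1 C2, is_cycle G C1 -> is_cycle G C2 -> C1 = C2) -> pseudoforest G.
Proof.
move=> uq; apply/forall_inP => x xG.
set K := component G x.
have key : forall w, connect (adj G) x w -> connect (adj K) x w.
  move=> w /connectP [p pp ->]; apply/connectP; exists p => //.
  exact: comp_path (connect0 _ _) pp.
have conK : connected K.
  apply/forall_inP => y; rewrite /K /component /induced /= in_setI inE => /andP [_ xy].
  apply/forall_inP => z; rewrite in_setI inE => /andP [_ xz].
  apply: connect_trans (key z xz); rewrite /adj connectE_sym; exact: key.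
have subK : forall C, is_cycle K C -> is_cycle G C.
  move=> C; rewrite !is_cycleE => /andP [sC cC]; rewrite cC andbT.
  apply: subset_trans sC _; apply/subsetP => f; rewrite /K /component /induced /= inE.
  by case/andP.
case: (pickP (fun C => is_cycle K C)) => [C0 c0 | none].
  apply/orP; right; rewrite /unicyclic conK /=; apply/cards1P; exists C0.
  apply/setP => C; rewrite !inE; apply/idP/eqP => [cC| ->//].
  exact: uq (subK _ cC) (subK _ c0).
apply/orP; left; rewrite /tree conK /acyclic; apply/forallP => C; by rewrite none.
Qed.


Lemma forest_cyc_conn {T : finType} (F : graph T) (H D : {set {set T}}) p q :
  forest F -> H \subset edges F -> wfE D -> cyc D -> D \subset [set p; q] |: H -> p != q ->
  connect (adjE H) p q.
Proof.
move=> fF sH wD cD sD pq.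
case: (boolP ([set p; q] \in D)) => pqD.
  apply: connect_mono (cycle_conn wD cD pqD pq).
  apply/subsetP => g; rewrite in_setD1 => /andP [gpq gD].
  by move: (subsetP sD _ gD); rewrite in_setU1 (negbTE gpq).
have : is_cycle F D.
  rewrite is_cycleE cD andbT; apply/subsetP => g gD; apply: (subsetP sH).
  move: (subsetP sD _ gD); rewrite in_setU1 => /orP [/eqP gpq|//].
  by rewrite -gpq gD in pqD.
by move/forallP: fF => /(_ D) /negP.
Qed.

Lemma part1 {T : finType} (F : graph T) : wf F -> forest F ->
  forall a b c d : T, interchangeable F a b c d -> p_switch F a b c d.
Proof.
move=> wF fF a b c d Hi.
move: (Hi); rewrite /interchangeable => /and5P [abF cdF dj acF bdF].
have noC : forall C, is_cycle F C -> False.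
  by move=> C cC; move/forallP: fF => /(_ C); rewrite cC.
apply/and3P; split => //.
  by apply: pf_of_uniq => C1 C2 /noC.
have ab : a != b by have [h _] := wF _ abF; move: h; rewrite cards2; case: (a != b).
have ac : a != c.
  by apply/eqP => e; have := disjointFr dj (set21 a b); rewrite e set21.
have bd : b != d.
  by apply/eqP => e; have := disjointFr dj (set22 a b); rewrite e set22.
have cdab : [set c; d] != [set a; b].
  by apply/eqP => e; have := disjointFr dj (set21 a b); rewrite e set21.
rewrite /switch Hi; apply: pf_of_uniq => C1 C2; rewrite !is_cycleE /=.
move=> /andP [s1 c1] /andP [s2 c2]; apply/eqP/negPn/negP => ne.
set H := edges F :\ [set a; b] :\ [set c; d].
set E' := H :|: [set [set a; c]; [set b; d]].
have sH : H \subset edges F by apply/subsetP => g; rewrite !in_setD1 => /and3P [].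
have wE : wfE E'.
  move=> g; rewrite in_setU => /orP [/(subsetP sH) /wF [] //|].
  by case/set2P => ->; rewrite cards2 ?ac ?bd.
have [D1 /andP [sD1 cD1]] := two_cycles [set a; c] wE s1 s2 c1 c2 ne.
have [D2 /andP [sD2 cD2]] := two_cycles [set b; d] wE s1 s2 c1 c2 ne.
have wD1 : wfE D1 by move=> g gD; apply: wE; move: (subsetP sD1 _ gD); rewrite in_setD1 => /andP [].
have wD2 : wfE D2 by move=> g gD; apply: wE; move: (subsetP sD2 _ gD); rewrite in_setD1 => /andP [].
have bdH : connect (adjE H) b d.
  apply: (forest_cyc_conn fF sH wD1 cD1) => //; apply/subsetP => g gD.
  move: (subsetP sD1 _ gD); rewrite in_setD1 in_setU1 in_setU in_set2 => /andP [gac].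
  by rewrite (negbTE gac) /= orbC.
have acH : connect (adjE H) a c.
  apply: (forest_cyc_conn fF sH wD2 cD2) => //; apply/subsetP => g gD.
  move: (subsetP sD2 _ gD); rewrite in_setD1 in_setU1 in_setU in_set2 => /andP [gbd].
  by rewrite (negbTE gbd) /= orbF orbC.
set E1 := edges F :\ [set a; b].
have sHE1 : H \subset E1 by apply/subsetP => g; rewrite /H in_setD1 => /andP [].
have abE : connect (adjE E1) a b.
  apply: connect_trans (connect_mono sHE1 acH) _.
  apply: connect_trans (connect1 (_ : adjE E1 c d)) _.
    by rewrite /adjE in_setD1 cdab cdF.
  by rewrite connectE_sym; apply: connect_mono sHE1 bdH.
have nab : [set a; b] \notin E1 by rewrite in_setD1 eqxx.
have [C [sC _ cC]] := path_cycle abE nab ab.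
apply: (noC C); rewrite is_cycleE cC andbT; apply: subset_trans sC _.
apply/subsetP => g; rewrite in_setU1 => /orP [/eqP -> //|]; by rewrite in_setD1 => /andP [].
Qed.

Lemma part2 {T : finType} (F U : graph T) : wf F -> wf U -> forest F -> unicyclic U ->
  [disjoint verts F & verts U] ->
  forall a b c d : T,
    [set a; b] \in edges F -> [set c; d] \in edges (Forest U) ->
    p_switch (gunion F U) a b c d.
Proof.
move=> wF wU fF /andP [_ /cards1P [C0 hC0]] dj a b c d abF cdFU.
have cdU : [set c; d] \in edges U by move: cdFU; rewrite /Forest /= in_setD => /andP [].
have noC : forall C, is_cycle F C -> False.
  by move=> C cC; move/forallP: fF => /(_ C); rewrite cC.
have [_ /subsetP abV] := wF _ abF.
have [_ /subsetP cdV] := wU _ cdU.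
have aF := abV a (set21 a b). have bF := abV b (set22 a b).
have cU := cdV c (set21 c d). have dU := cdV d (set22 c d).
have notFU : forall x, x \in verts F -> x \in verts U -> False.
  by move=> x xF; rewrite (disjointFr dj xF).
set E0 := edges F :|: edges U.
have wE0 : wfE E0 by move=> g; rewrite in_setU => /orP [/wF [] | /wU []].
have cycU : forall C : {set {set T}}, C \subset E0 -> cyc C -> C \subset edges U.
  move=> C sC cC; case/orP: (cycle_split wF wU dj sC cC) => // sub.
  by case: (noC C); rewrite is_cycleE sub cC.
have cycG : forall C : {set {set T}}, C \subset E0 -> cyc C -> C = C0.
  move=> C sC cC.
  have : C \in [set C | is_cycle U C] by rewrite inE is_cycleE (cycU C sC cC) cC.
  by rewrite hC0 inE => /eqP.
have Hi : interchangeable (gunion F U) a b c d.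
  rewrite /interchangeable /= !in_setU abF cdU orbT /=.
  apply/and3P; split.
  - apply: (disjointWl _ (disjointWr _ dj)); apply/subsetP => x /set2P [] ->; by [].
  - apply/norP; split; apply/negP.
      by move=> /wF [_ /subsetP] /(_ c (set22 a c)) => cF; exact: notFU cF cU.
    by move=> /wU [_ /subsetP] /(_ a (set21 a c)) => aU; exact: notFU aF aU.
  - apply/norP; split; apply/negP.
      by move=> /wF [_ /subsetP] /(_ d (set22 b d)) => dF; exact: notFU dF dU.
    by move=> /wU [_ /subsetP] /(_ b (set21 b d)) => bU; exact: notFU bF bU.
apply/and3P; split => //.
  apply: pf_of_uniq => C1 C2; rewrite !is_cycleE /= => /andP [s1 c1] /andP [s2 c2].
  by rewrite (cycG _ s1 c1) (cycG _ s2 c2).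
rewrite /switch Hi; apply: pf_of_uniq => C1 C2; rewrite !is_cycleE /= -/E0.
set H := E0 :\ [set a; b] :\ [set c; d].
have ac : a != c by apply/eqP => e; apply: (notFU a aF); rewrite e.
have bd : b != d by apply/eqP => e; apply: (notFU b bF); rewrite e.
have sHE0 : H \subset E0 by apply/subsetP => g; rewrite !in_setD1 => /and3P [].
have wE' : wfE (H :|: [set [set a; c]; [set b; d]]).
  move=> g; rewrite in_setU => /orP [/(subsetP sHE0) /wE0 //|].
  by case/set2P => ->; rewrite cards2 ?ac ?bd.
have noab : ~ connect (adjE H) a b.
  move=> abH.
  have abE : connect (adjE (E0 :\ [set a; b])) a b.
    by apply: connect_mono abH; apply/subsetP => g; rewrite /H in_setD1 => /andP [].
  have nab : [set a; b] \notin E0 :\ [set a; b] by rewrite in_setD1 eqxx.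
  have ab : a != b by have [h _] := wF _ abF; move: h; rewrite cards2; case: (a != b).
  have [C [sC abC cC]] := path_cycle abE nab ab.
  have sCE : C \subset E0.
    apply: subset_trans sC _; apply/subsetP => g; rewrite in_setU1 => /orP [/eqP -> |]; first by rewrite in_setU abF.
    by rewrite in_setD1 => /andP [].
  have := subsetP (cycU C sCE cC) _ abC => /wU [_ /subsetP] /(_ a (set21 a b)) aU.
  exact: notFU aF aU.
have sideF : forall x y, connect (adjE H) x y -> x \in verts F -> y \in verts F.
  move=> x y; apply: side wF wU dj _; exact: sHE0.
have key : forall D : {set {set T}}, D \subset H :|: [set [set a; c]; [set b; d]] -> cyc D -> D = C0.
  move=> D sD cD.
  have wD : wfE D by move=> g gD; apply: wE'; exact: (subsetP sD).
  have acD : [set a; c] \notin D.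
    apply/negP => acD; have := cycle_conn wD cD acD ac.
    have sub : D :\ [set a; c] \subset [set b; d] |: H.
      apply/subsetP => g; rewrite in_setD1 => /andP [gac /(subsetP sD)].
      by rewrite in_setU in_set2 in_setU1 (negbTE gac) /= orbC.
    move/(connect_mono sub)/reach_add => /or3P [h|h|h].
    - exact: notFU (sideF _ _ h aF) cU.
    - exact: noab h.
    - exact: notFU (sideF _ _ h aF) dU.
  have bdD : [set b; d] \notin D.
    apply/negP => bdD; have := cycle_conn wD cD bdD bd.
    have sub : D :\ [set b; d] \subset [set a; c] |: H.
      apply/subsetP => g; rewrite in_setD1 => /andP [gbd /(subsetP sD)].
      by rewrite in_setU in_set2 in_setU1 (negbTE gbd) /= orbF orbC.
    move/(connect_mono sub)/reach_add => /or3P [h|h|h].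
    - exact: notFU (sideF _ _ h bF) dU.
    - by apply: noab; rewrite connectE_sym.
    - exact: notFU (sideF _ _ h bF) cU.
  apply: cycG cD; apply: subset_trans sHE0; apply/subsetP => g gD.
  move: (subsetP sD _ gD); rewrite in_setU => /orP [//|/set2P [] e].
    by rewrite -e gD in acD.
  by rewrite -e gD in bdD.
move=> /andP [s1 c1] /andP [s2 c2].
by rewrite (key _ s1 c1) (key _ s2 c2).
Qed.

Unset Implicit Arguments.

Theorem lemma4p3 (T : finType) :
  (forall F : graph T, wf F -> forest F ->
     forall a b c d : T, interchangeable F a b c d -> p_switch F a b c d)
  /\
  (forall F U : graph T, wf F -> wf U -> forest F -> unicyclic U ->
     [disjoint verts F & verts U] ->
     forall a b c d : T,
       [set a; b] \in edges F -> [set c; d] \in edges (Forest U) ->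
       p_switch (gunion F U) a b c d).
Proof.
split; [exact: part1 | exact: part2].
Qed.
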